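(* Let $\mathbf{E}\subseteq\mathbf{A}\in\mathsf{NA}$ (with $\mathbf{E}$ a subalgebra of $\mathbf{A}$), where: $\mathbf{E}$ is finite and symmetric, $1'$ is an atom of $\mathbf{E}$, and $\mathbf{E}$ has $p>3$ atoms; $\mathbf{E}$ has no 1-cycles, i.e., $u;u\cdot u=0$ for every atom $u\le 0'$ of $\mathbf{E}$; $\mathbf{A}$ is finite and symmetric, $1'$ is an atom of $\mathbf{A}$, and some diversity atom of $\mathbf{E}$ is the join of at least $p^{p-1}$ atoms of $\mathbf{A}$. Then (i) $\mathbf{A}\notin\mathbf{S}\,\mathsf{Ra}\,\mathsf{CA}_{p+1}$; (ii) $\mathbf{Ca}(B_3(\mathbf{A}))\notin\mathbf{S}\,\mathsf{Nr}_3\mathsf{CA}_{p+1}$.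
   Context: $\mathsf{NA}$ is the class of non-associative relation algebras (Tarski's relation algebra axioms without associativity of relative product $;$); $1'$ is the identity element, $0'$ its Boolean complement; symmetric means $x^{\smile}=x$ for all $x$; a diversity atom is an atom below $0'$. Basic matrices: for an atomic $\mathbf{A}\in\mathsf{NA}$ and $k<\omega$, $B_k(\mathbf{A})$ is the set of maps $\mu:k\times k\to At(\mathbf{A})$ with $\mu_{i,i}\le1'$, $\mu_{i,j}^{\smile}=\mu_{j,i}$ and $\mu_{i,l};\mu_{l,j}\ge\mu_{i,j}$ for all $i,j,l<k$. For $\mathcal{M}\subseteq B_k(\mathbf{A})$, $\mathbf{Ca}(\mathcal{M})$ is the algebra of all subsets of $\mathcal{M}$ with set Boolean operations, cylindrifications $c_iX=\{\mu\in\mathcal{M}:\exists\mu'\in X$ with $\mu_{l,m}=\mu'_{l,m}$ whenever $l,m\ne i\}$ and diagonal elements $d_{ij}=\{\mu\in\mathcal{M}:\mu_{i,j}\le1'\}$, for $i,j<k$. Cylindric algebras: $\mathsf{CA}_m$ is the class of $m$-dimensional cylindric algebras (Henkin–Monk–Tarski); $s^i_jx=c_i(d_{ij}\cdot x)$ for $i\ne j$. For $\mathbf{D}\in\mathsf{CA}_m$ and $n\le m$, $\mathsf{Nr}_n\mathbf{D}$ (neat $n$-reduct) is the algebra of all $x$ with $c_ix=x$ for $n\le i<m$, with the Boolean operations and $c_i,d_{ij}$ for $i,j<n$. For $\mathbf{D}\in\mathsf{CA}_m$ with $m\ge3$, $\mathbf{Ra}(\mathbf{D})$ has universe $\{x:c_ix=x$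 for $2\le i<m\}$, the Boolean operations of $\mathbf{D}$, $1'=d_{01}$, $x^{\smile}=s^2_0s^0_1s^1_2x$, $x;y=c_2(s^1_2x\cdot s^0_2y)$. $\mathsf{Ra}\,\mathsf{CA}_m$ is the class of algebras isomorphic to $\mathbf{Ra}(\mathbf{D})$ for some subalgebra $\mathbf{D}$ of $\mathsf{Nr}_3\mathbf{D}'$ with $\mathbf{D}'\in\mathsf{CA}_m$. For a class $\mathsf{K}$, $\mathbf{S}\,\mathsf{K}$ is the class of algebras isomorphic to subalgebras of members of $\mathsf{K}$; thus $\mathbf{S}\,\mathsf{Nr}_3\mathsf{CA}_m$ is the class of algebras isomorphic to subalgebras of $\mathsf{Nr}_3\mathbf{D}$ for $\mathbf{D}\in\mathsf{CA}_m$. *)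

(* Defs.v *)
From mathcomp Require Import all_boot.
Set Implicit Arguments. Unset Strict Implicit. Unset Printing Implicit Defensive.

Definition is_BA (T : Type) (jn mt : T -> T -> T) (cp : T -> T) (zr un : T) : Prop :=
  (forall x y, jn x y = jn y x) /\ (forall x y, mt x y = mt y x) /\
  (forall x y z, mt x (jn y z) = jn (mt x y) (mt x z)) /\
  (forall x y z, jn x (mt y z) = mt (jn x y) (jn x z)) /\
  (forall x, jn x zr = x) /\ (forall x, mt x un = x) /\
  (forall x, jn x (cp x) = un) /\ (forall x, mt x (cp x) = zr).

Record NAops (T : Type) := NAOps {
  na_jn : T -> T -> T; na_mt : T -> T -> T; na_cp : T -> T;
  na_zr : T; na_un : T;
  na_comp : T -> T -> T;
  na_conv : T -> T;
  na_id : T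
}.

Definition is_NA (T : Type) (o : NAops T) : Prop :=
  is_BA (na_jn o) (na_mt o) (na_cp o) (na_zr o) (na_un o) /\
  (forall x y z, na_comp o (na_jn o x y) z = na_jn o (na_comp o x z) (na_comp o y z)) /\
  (forall x, na_comp o x (na_id o) = x) /\
  (forall x, na_conv o (na_conv o x) = x) /\
  (forall x y, na_conv o (na_jn o x y) = na_jn o (na_conv o x) (na_conv o y)) /\
  (forall x y, na_conv o (na_comp o x y) = na_comp o (na_conv o y) (na_conv o x)) /\
  (forall x y, na_jn o (na_comp o (na_conv o x) (na_cp o (na_comp o x y))) (na_cp o y)
               = na_cp o y).

Section NAnotions.
Variables (T : finType) (o : NAops T).
Definition na_le (x y : T) : bool := na_jn o x y == y.
Definition na_div : T := na_cp o (na_id o).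
Definition atom_in (E : {set T}) (x : T) : bool :=
  [&& x \in E, x != na_zr o & [forall y in E, na_le y x ==> (y == na_zr o) || (y == x)]].
Definition subalgebra (E : {set T}) : Prop :=
  na_zr o \in E /\ na_un o \in E /\ na_id o \in E /\
  (forall x y, x \in E -> y \in E -> na_jn o x y \in E) /\
  (forall x y, x \in E -> y \in E -> na_mt o x y \in E) /\
  (forall x, x \in E -> na_cp o x \in E) /\
  (forall x y, x \in E -> y \in E -> na_comp o x y \in E) /\
  (forall x, x \in E -> na_conv o x \in E).
Definition symmetric_in (E : {set T}) : Prop := forall x, x \in E -> na_conv o x = x.

Definition mat := {ffun 'I_3 * 'I_3 -> T}.
Definition basic3 (mu : mat) : bool :=
  [forall i : 'I_3, forall j : 'I_3, forall l : 'I_3,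
     [&& atom_in [set: T] (mu (i, j)), na_le (mu (i, i)) (na_id o),
         na_conv o (mu (i, j)) == mu (j, i) &
         na_le (mu (i, j)) (na_comp o (mu (i, l)) (mu (l, j)))]].
Definition B3 := {mu : mat | basic3 mu}.
End NAnotions.

Record CAops (T : Type) := CAOps {
  ca_jn : T -> T -> T; ca_mt : T -> T -> T; ca_cp : T -> T;
  ca_zr : T; ca_un : T;
  ca_c : nat -> T -> T;
  ca_d : nat -> nat -> T
}.

Definition ca_le (T : Type) (o : CAops T) (x y : T) : Prop := ca_jn o x y = y.

(* CA_m (Henkin-Monk-Tarski axioms C0-C7), indices i,j,k < m *)
Definition is_CA (m : nat) (T : Type) (o : CAops T) : Prop :=
  is_BA (ca_jn o) (ca_mt o) (ca_cp o) (ca_zr o) (ca_un o) /\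
  (forall i, i < m -> ca_c o i (ca_zr o) = ca_zr o) /\
  (forall i x, i < m -> ca_le o x (ca_c o i x)) /\
  (forall i x y, i < m ->
     ca_c o i (ca_mt o x (ca_c o i y)) = ca_mt o (ca_c o i x) (ca_c o i y)) /\
  (forall i j x, i < m -> j < m -> ca_c o i (ca_c o j x) = ca_c o j (ca_c o i x)) /\
  (forall i, i < m -> ca_d o i i = ca_un o) /\
  (forall i j k, i < m -> j < m -> k < m -> k != i -> k != j ->
     ca_d o i j = ca_c o k (ca_mt o (ca_d o i k) (ca_d o k j))) /\
  (forall i j x, i < m -> j < m -> i != j ->
     ca_mt o (ca_c o i (ca_mt o (ca_d o i j) x))
             (ca_c o i (ca_mt o (ca_d o i j) (ca_cp o x))) = ca_zr o).

Definition ca_s (T : Type) (o : CAops T) (i j : nat) (x : T) : T :=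
  ca_c o i (ca_mt o (ca_d o i j) x).

Definition ra_conv (T : Type) (o : CAops T) (x : T) : T :=
  ca_s o 2 0 (ca_s o 0 1 (ca_s o 1 2 x)).
Definition ra_comp (T : Type) (o : CAops T) (x y : T) : T :=
  ca_c o 2 (ca_mt o (ca_s o 1 2 x) (ca_s o 0 2 y)).

(* A (an NA) belongs to S Ra CA_m: A is isomorphic to a subalgebra of Ra(D)
   for some subalgebra D (universe Dsub) of Nr_3 D', with D' in CA_m. *)
Definition in_SRaCA (m : nat) (T : Type) (o : NAops T) : Prop :=
  exists (D' : Type) (oD : CAops D'), is_CA m oD /\
  exists Dsub : D' -> Prop,
    (Dsub (ca_zr oD) /\ Dsub (ca_un oD) /\
     (forall x y, Dsub x -> Dsub y -> Dsub (ca_jn oD x y)) /\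
     (forall x y, Dsub x -> Dsub y -> Dsub (ca_mt oD x y)) /\
     (forall x, Dsub x -> Dsub (ca_cp oD x)) /\
     (forall i x, i < 3 -> Dsub x -> Dsub (ca_c oD i x)) /\
     (forall i j, i < 3 -> j < 3 -> Dsub (ca_d oD i j)) /\
     (forall x, Dsub x -> forall i, 3 <= i < m -> ca_c oD i x = x)) /\
  exists h : T -> D',
    injective h /\
    (* h maps into the universe of Ra(D) *)
    (forall a, Dsub (h a) /\ ca_c oD 2 (h a) = h a) /\
    (forall a b, h (na_jn o a b) = ca_jn oD (h a) (h b)) /\
    (forall a b, h (na_mt o a b) = ca_mt oD (h a) (h b)) /\
    (forall a, h (na_cp o a) = ca_cp oD (h a)) /\
    h (na_zr o) = ca_zr oD /\ h (na_un o) = ca_un oD /\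
    h (na_id o) = ca_d oD 0 1 /\
    (forall a, h (na_conv o a) = ra_conv oD (h a)) /\
    (forall a b, h (na_comp o a b) = ra_comp oD (h a) (h b)).

(* A CA_n (given by o) belongs to S Nr_n CA_m: it embeds into Nr_n D, D in CA_m. *)
Definition in_SNrCA (n m : nat) (T : Type) (o : CAops T) : Prop :=
  exists (D : Type) (oD : CAops D), is_CA m oD /\
  exists h : T -> D,
    injective h /\
    (forall x i, n <= i < m -> ca_c oD i (h x) = h x) /\
    (forall x y, h (ca_jn o x y) = ca_jn oD (h x) (h y)) /\
    (forall x y, h (ca_mt o x y) = ca_mt oD (h x) (h y)) /\
    (forall x, h (ca_cp o x) = ca_cp oD (h x)) /\
    h (ca_zr o) = ca_zr oD /\ h (ca_un o) = ca_un oD /\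
    (forall i x, i < n -> h (ca_c o i x) = ca_c oD i (h x)) /\
    (forall i j, i < n -> j < n -> h (ca_d o i j) = ca_d oD i j).

Section CaB3.
Variables (T : finType) (o : NAops T).
Definition Ca_cyl (i : nat) (X : {set B3 o}) : {set B3 o} :=
  [set mu : B3 o | [exists mu' in X, [forall l : 'I_3, forall k : 'I_3,
      ((nat_of_ord l != i) && (nat_of_ord k != i)) ==> (val mu (l, k) == val mu' (l, k))]]].
Definition Ca_diag (i j : nat) : {set B3 o} :=
  [set mu : B3 o | na_le o (val mu (inord i, inord j)) (na_id o)].
Definition CaB3 : CAops {set B3 o} :=
  @CAOps {set B3 o} (@setU _) (@setI _) (fun X => ~: X) set0 setT Ca_cyl Ca_diag.
End CaB3.

(* Main.v *)
Require Import Defs.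
From mathcomp Require Import all_boot.
From mathcomp Require Import zify.
From Stdlib Require Import Classical.
Set Implicit Arguments. Unset Strict Implicit. Unset Printing Implicit Defensive.

Section BA.
Variables (T : Type) (J M : T -> T -> T) (C : T -> T) (Z U : T).
Hypothesis HB : is_BA J M C Z U.

Lemma jC x y : J x y = J y x. Proof. by case: HB. Qed.
Lemma mC x y : M x y = M y x. Proof. by case: HB => _ []. Qed.
Lemma mD x y z : M x (J y z) = J (M x y) (M x z). Proof. by case: HB => _ [] _ []. Qed.
Lemma jD x y z : J x (M y z) = M (J x y) (J x z). Proof. by case: HB => _ [] _ [] _ []. Qed.
Lemma j0 x : J x Z = x. Proof. by case: HB => _ [] _ [] _ [] _ []. Qed.
Lemma m1 x : M x U = x. Proof. by case: HB => _ [] _ [] _ [] _ [] _ []. Qed.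
Lemma jN x : J x (C x) = U. Proof. by case: HB => _ [] _ [] _ [] _ [] _ [] _ []. Qed.
Lemma mN x : M x (C x) = Z. Proof. by case: HB => _ [] _ [] _ [] _ [] _ [] _ []. Qed.

Lemma jj x : J x x = x.
Proof. by rewrite -[J x x]m1 -(jN x) -jD mN j0. Qed.
Lemma j1 x : J x U = U.
Proof. by rewrite -[J x U]m1 -{2}(jN x) -jD mC m1 jN. Qed.
Lemma jAb x y : J x (M x y) = x.
Proof. by rewrite -{1}(m1 x) -mD jC j1 m1. Qed.
Lemma mm x : M x x = x.
Proof. by rewrite -[M x x]j0 -(mN x) -mD jN m1. Qed.
Lemma m0 x : M x Z = Z.
Proof. by rewrite -[M x Z]j0 -{2}(mN x) -mD jC j0 mN. Qed.
Lemma mAb x y : M x (J x y) = x.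
Proof. by rewrite -{1}(j0 x) -jD mC m0 j0. Qed.
Lemma j0l x : J Z x = x. Proof. by rewrite jC j0. Qed.
Lemma m1l x : M U x = x. Proof. by rewrite mC m1. Qed.
Lemma m0l x : M Z x = Z. Proof. by rewrite mC m0. Qed.
Lemma j1l x : J U x = U. Proof. by rewrite jC j1. Qed.
Lemma mDl x y z : M (J y z) x = J (M y x) (M z x).
Proof. by rewrite mC mD !(mC x). Qed.
Lemma jDl x y z : J (M y z) x = M (J y x) (J z x).
Proof. by rewrite jC jD !(jC x). Qed.

Lemma jA x y z : J x (J y z) = J (J x y) z.
Proof.
set L := J x (J y z); set R := J (J x y) z.
have e1 : M x L = M x R.
  by rewrite /L /R mAb mD mAb jAb.
have e2 : M (C x) L = M (C x) R.
  by rewrite /L /R !mD !(mC (C x) x) mN !j0l.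
rewrite -[L]m1 -(jN x) mD (mC L x) (mC L (C x)) e1 e2.
by rewrite -!(mC R) -mD jN m1.
Qed.

Lemma compl_uniq x y : J x y = U -> M x y = Z -> y = C x.
Proof.
move=> h1 h2.
have -> : y = M (C x) y by rewrite -{1}(m1 y) -(jN x) mD (mC y x) h2 j0l mC.
by rewrite -{2}(m1 (C x)) -h1 mD (mC (C x) x) mN j0l.
Qed.

Lemma CC x : C (C x) = x.
Proof. by symmetry; apply: compl_uniq; [rewrite jC jN | rewrite mC mN]. Qed.
End BA.

Lemma is_BA_dual (T : Type) (J M : T -> T -> T) (C : T -> T) (Z U : T) :
  is_BA J M C Z U -> is_BA M J C U Z.
Proof.
move=> H.
do !split; first [exact: (mC H) | exact: (jC H) | exact: (jD H) | exact: (mD H)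
  | exact: (m1 H) | exact: (j0 H) | exact: (mN H) | exact: (jN H)].
Qed.

Section BA2.
Variables (T : Type) (J M : T -> T -> T) (C : T -> T) (Z U : T).
Hypothesis HB : is_BA J M C Z U.
Let HD := is_BA_dual HB.

Lemma mA x y z : M x (M y z) = M (M x y) z. Proof. exact: (jA HD). Qed.
Lemma CJ x y : C (J x y) = M (C x) (C y).
Proof.
symmetry; apply: (compl_uniq HB).
- rewrite (jD HB) -!(jA HB) (jN HB) (j1 HB) (m1 HB).
  by rewrite (jC HB y (C x)) (jA HB) (jN HB) (j1l HB).
- rewrite (mDl HB) mA (mN HB) (m0l HB) (j0l HB).
  by rewrite (mC HB (C x) (C y)) mA (mN HB) (m0l HB).
Qed.
End BA2.
Section BA3.
Variables (T : Type) (J M : T -> T -> T) (C : T -> T) (Z U : T).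
Hypothesis HB : is_BA J M C Z U.
Lemma CM x y : C (M x y) = J (C x) (C y). Proof. exact: (CJ (is_BA_dual HB)). Qed.
Lemma C0 : C Z = U.
Proof. by symmetry; apply: (compl_uniq HB); rewrite ?(j0l HB) ?(m0l HB). Qed.
Lemma C1 : C U = Z.
Proof. by symmetry; apply: (compl_uniq HB); rewrite ?(j1l HB) ?(m1l HB). Qed.

Definition le x y := J x y = y.
Lemma leM x y : le x y <-> M x y = x.
Proof. split=> h; first by rewrite -h (mAb HB).
by rewrite /le -h (jC HB) (mC HB) (jAb HB). Qed.
Lemma le_refl x : le x x. Proof. exact: (jj HB). Qed.
Lemma le_trans x y z : le x y -> le y z -> le x z.
Proof. rewrite /le => h1 h2. by rewrite -h2 (jA HB) h1. Qed.
Lemma le_anti x y : le x y -> le y x -> x = y.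
Proof. rewrite /le => h1 h2. by rewrite -h1 (jC HB). Qed.
Lemma le_jl x y : le x (J x y). Proof. by rewrite /le (jA HB) (jj HB). Qed.
Lemma le_jr x y : le y (J x y). Proof. by rewrite (jC HB); exact: le_jl. Qed.
Lemma le_ml x y : le (M x y) x. Proof. by apply/leM; rewrite (mC HB) (mA HB) (mm HB). Qed.
Lemma le_mr x y : le (M x y) y. Proof. by rewrite (mC HB); exact: le_ml. Qed.
Lemma le_jlub x y z : le x z -> le y z -> le (J x y) z.
Proof. rewrite /le => h1 h2. by rewrite -(jA HB) h2 h1. Qed.
Lemma le_mglb x y z : le z x -> le z y -> le z (M x y).
Proof. move=> /leM h1 /leM h2; apply/leM. by rewrite (mA HB) h1 h2. Qed.
Lemma le0 x : le Z x. Proof. exact: (j0l HB). Qed.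
Lemma le1 x : le x U. Proof. exact: (j1 HB). Qed.
Lemma le0E x : le x Z -> x = Z. Proof. by rewrite /le (j0 HB). Qed.
Lemma leM2 x y x' y' : le x x' -> le y y' -> le (M x y) (M x' y').
Proof. move=> h1 h2; apply: le_mglb; apply: le_trans; [apply: le_ml|done|apply: le_mr|done]. Qed.
Lemma leJ2 x y x' y' : le x x' -> le y y' -> le (J x y) (J x' y').
Proof. move=> h1 h2; apply: le_jlub; apply: le_trans; [apply: h1|apply: le_jl|apply: h2|apply: le_jr]. Qed.
Lemma le_compl x y : M x (C y) = Z -> le x y.
Proof.
move=> h; apply/leM.
by rewrite -{2}(m1 HB x) -(jN HB y) (mD HB) h (j0 HB).
Qed.
Lemma le_complE x y : le x y -> M x (C y) = Z.
Proof. move/leM=> <-. by rewrite -(mA HB) (mN HB) (m0 HB). Qed.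
Lemma nz_le x y : x <> Z -> le x y -> M x y <> Z.
Proof. by move=> h /leM ->. Qed.
Lemma nz_mono x y : le x y -> x <> Z -> y <> Z.
Proof. by move=> h hx hy; apply: hx; apply: le0E; rewrite -hy. Qed.
End BA3.
Section CA.
Variables (D : Type) (o : CAops D) (m : nat).
Hypothesis HC : is_CA m o.
Local Notation J := (ca_jn o). Local Notation M := (ca_mt o).
Local Notation C := (ca_cp o). Local Notation Z := (ca_zr o).
Local Notation U := (ca_un o). Local Notation c := (ca_c o).
Local Notation d := (ca_d o). Local Notation s := (ca_s o).
Local Notation le := (le J).

Let HB : is_BA J M C Z U := HC.1.
Lemma cZ i : i < m -> c i Z = Z. Proof. by case: HC => _ [h _]; apply: h. Qed.
Lemma cinc i x : i < m -> le x (c i x). Proof. by case: HC => _ [_ [h _]]; apply: h. Qed.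
Lemma c3 i x y : i < m -> c i (M x (c i y)) = M (c i x) (c i y).
Proof. by case: HC => _ [_ [_ [h _]]]; apply: h. Qed.
Lemma c4 i j x : i < m -> j < m -> c i (c j x) = c j (c i x).
Proof. by case: HC => _ [_ [_ [_ [h _]]]]; apply: h. Qed.
Lemma c5 i : i < m -> d i i = U.
Proof. by case: HC => _ [_ [_ [_ [_ [h _]]]]]; apply: h. Qed.
Lemma c6 i j k : i < m -> j < m -> k < m -> k != i -> k != j ->
  d i j = c k (M (d i k) (d k j)).
Proof. by case: HC => _ [_ [_ [_ [_ [_ [h _]]]]]]; apply: h. Qed.
Lemma c7 i j x : i < m -> j < m -> i != j ->
  M (c i (M (d i j) x)) (c i (M (d i j) (C x))) = Z.
Proof. by case: HC => _ [_ [_ [_ [_ [_ [_ h]]]]]]; apply: h. Qed.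

Lemma cU i : i < m -> c i U = U.
Proof. move=> hi. have := cinc U hi. by rewrite /le (j1l HB). Qed.
Lemma cc i x : i < m -> c i (c i x) = c i x.
Proof. move=> hi. by rewrite -{1}(m1l HB (c i x)) c3 // cU // (m1l HB). Qed.
Lemma c_closedM i x y : i < m -> c i y = y -> c i (M x y) = M (c i x) y.
Proof. move=> hi hy. by rewrite -{1}hy c3 // hy. Qed.
Lemma c_closedMl i x y : i < m -> c i y = y -> c i (M y x) = M y (c i x).
Proof. move=> hi hy. by rewrite (mC HB) c_closedM // (mC HB). Qed.
Lemma c_mono i x y : i < m -> le x y -> le (c i x) (c i y).
Proof.
move=> hi hxy.
have h : M x (c i y) = x by apply/(leM HB); apply: (le_trans HB) hxy (cinc _ hi).
by apply/(leM HB); rewrite -c3 // h.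
Qed.
Lemma cC i x : i < m -> c i (C (c i x)) = C (c i x).
Proof.
move=> hi; apply: (le_anti HB); last exact: cinc.
apply: (le_compl HB); rewrite (CC HB).
by rewrite -c3 // (mC HB) (mN HB) cZ.
Qed.
Lemma c_add i x y : i < m -> c i (J x y) = J (c i x) (c i y).
Proof.
move=> hi; apply: (le_anti HB); last first.
  by apply: (le_jlub HB); apply: c_mono => //; [apply: (le_jl HB)|apply: (le_jr HB)].
set z := J (c i x) (c i y).
have hz : c i z = z.
  have e : C z = c i (M (C (c i x)) (c i (C (c i y)))).
    by rewrite c3 // !cC // /z (CJ HB).
  by rewrite -(CC HB z) e cC.
rewrite -hz; apply: c_mono => //; apply: (leJ2 HB) => //; exact: cinc.
Qed.
Lemma c_nz i x : i < m -> c i x <> Z -> x <> Z.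
Proof. by move=> hi h hx; apply: h; rewrite hx cZ. Qed.
Lemma conjP i dd X : i < m -> c i dd = dd -> dd <> Z -> le dd (c i X) -> M dd X <> Z.
Proof.
move=> hi hd hnz hle hdx; apply: hnz.
have := c3 X dd hi; rewrite hd (mC HB X) hdx cZ // => e.
by move/(leM HB): hle; rewrite (mC HB) -e.
Qed.

Lemma dsc i j x : i < m -> j < m -> i != j -> le (M (d i j) (c i (M (d i j) x))) x.
Proof.
move=> hi hj hij; apply: (le_compl HB).
rewrite (mC HB (d i j)) -(mA HB).
apply: (le0E HB); rewrite -(c7 x hi hj hij).
apply: (leM2 HB); first exact: (le_refl HB).
exact: cinc.
Qed.
Lemma d_sym1 i j : i < m -> j < m -> i != j -> le (d i j) (d j i).
Proof.
move=> hi hj hij.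
have e : c i (M (d i j) (d j i)) = U.
  by rewrite (mC HB) -c6 ?c5 // eq_sym.
have := dsc (d j i) hi hj hij; by rewrite e (m1 HB).
Qed.
Lemma d_sym i j : i < m -> j < m -> d i j = d j i.
Proof.
move=> hi hj; case: (eqVneq i j) => [->//|hij].
by apply: (le_anti HB); apply: d_sym1; rewrite // eq_sym.
Qed.
Lemma c_dii i j : i < m -> j < m -> i != j -> c i (d i j) = U.
Proof.
move=> hi hj hij; apply: (le_anti HB); first exact: (le1 HB).
have -> : U = c i (M (d j i) (d i j)) by rewrite -c6 ?c5 // eq_sym.
apply: c_mono => //; exact: (le_mr HB).
Qed.
Lemma c_djj i j : i < m -> j < m -> i != j -> c j (d i j) = U.
Proof. by move=> hi hj hij; rewrite d_sym // c_dii // eq_sym. Qed.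
Lemma c_dk i j k : i < m -> j < m -> k < m -> k != i -> k != j -> c k (d i j) = d i j.
Proof. by move=> *; rewrite (c6 (i:=i) (j:=j) (k:=k)) // cc. Qed.

Lemma s_mono i j x y : i < m -> le x y -> le (s i j x) (s i j y).
Proof. move=> hi h; apply: c_mono => //; apply: (leM2 HB) => //; exact: (le_refl HB). Qed.
Lemma s_add i j x y : i < m -> s i j (J x y) = J (s i j x) (s i j y).
Proof. by move=> hi; rewrite /ca_s (mD HB) c_add. Qed.
Lemma s_U i j : i < m -> j < m -> i != j -> s i j U = U.
Proof. by move=> *; rewrite /ca_s (m1 HB) c_dii. Qed.
Lemma s_Z i j : i < m -> s i j Z = Z.
Proof. by move=> *; rewrite /ca_s (m0 HB) cZ. Qed.
Lemma s_C i j x : i < m -> j < m -> i != j -> s i j (C x) = C (s i j x).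
Proof.
move=> hi hj hij; apply: (compl_uniq HB).
- by rewrite -s_add // (jN HB) s_U.
- exact: c7.
Qed.
Lemma s_M i j x y : i < m -> j < m -> i != j -> s i j (M x y) = M (s i j x) (s i j y).
Proof.
move=> hi hj hij.
by rewrite -[M x y](CC HB) (CM HB) s_C // s_add // !s_C // (CJ HB) !(CC HB).
Qed.
Lemma s_id i j y : i < m -> j < m -> i != j -> c i y = y -> s i j y = y.
Proof. by move=> hi hj hij hy; rewrite /ca_s c_closedM // c_dii // (m1l HB). Qed.
Lemma cs_s i j y : i < m -> c i (s i j y) = s i j y.
Proof. by move=> hi; rewrite /ca_s cc. Qed.
Lemma c_s_comm i j k y : i < m -> j < m -> k < m -> k != i -> k != j ->
  c k (s i j y) = s i j (c k y).
Proof.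
move=> hi hj hk hki hkj.
by rewrite /ca_s c4 // (mC HB (d i j)) c_closedM ?c_dk // (mC HB).
Qed.
Lemma s_bound i j y : i < m -> j < m -> i != j -> c j y = y -> c j (s i j y) = c i y.
Proof.
move=> hi hj hij hy.
by rewrite /ca_s c4 // c_closedM // c_djj // (m1l HB).
Qed.
Lemma s_chain i j k y : i < m -> j < m -> k < m -> i != j -> j != k -> i != k ->
  c j y = y -> s j k (s i j y) = s i k y.
Proof.
move=> hi hj hk hij hjk hik hy.
rewrite /ca_s -c_closedMl ?c_dk // 1?eq_sym //.
rewrite c4 // (mA HB) (mC HB (d j k)) c_closedM //.
by rewrite -c6 // eq_sym.
Qed.
Lemma dss i j y : i < m -> j < m -> i != j -> M (d i j) (s i j y) = M (d i j) y.
Proof.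
move=> hi hj hij; apply: (le_anti HB).
- apply: (le_mglb HB); first exact: (le_ml HB). exact: dsc.
- apply: (le_mglb HB); first exact: (le_ml HB). exact: cinc.
Qed.
Lemma s_back i j y : i < m -> j < m -> i != j -> c j y = y -> s j i (s i j y) = y.
Proof.
move=> hi hj hij hy.
rewrite {1}/ca_s -d_sym // dss // c_closedM // c_djj // (m1l HB) //.
Qed.
Lemma s_comm a b e f y : a < m -> b < m -> e < m -> f < m ->
  e != a -> e != b -> a != f ->
  s a b (s e f y) = s e f (s a b y).
Proof.
move=> ha hb he hf hea heb haf.
rewrite /ca_s -c_closedMl ?c_dk // -[in RHS]c_closedMl ?c_dk // 1?eq_sym //.
by rewrite c4 // !(mA HB) (mC HB (d a b)).
Qed.
End CA.

Section F.
Variables (D : Type) (o : CAops D) (m : nat).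
Hypothesis HC : is_CA m o.
Hypothesis hm : 4 < m.
Local Notation J := (ca_jn o). Local Notation M := (ca_mt o).
Local Notation C := (ca_cp o). Local Notation Z := (ca_zr o).
Local Notation U := (ca_un o). Local Notation c := (ca_c o).
Local Notation d := (ca_d o). Local Notation s := (ca_s o).
Local Notation le := (le J).
Let HB : is_BA J M C Z U := HC.1.

Definition sb i j x := if i == j then x else s i j x.
Definition Two x := forall k, 2 <= k < m -> c k x = x.
Definition F x i j := sb 0 i (sb 1 j x).

Lemma sb_ii i y : sb i i y = y. Proof. by rewrite /sb eqxx. Qed.
Lemma sb_M i j x y : i < m -> j < m -> sb i j (M x y) = M (sb i j x) (sb i j y).
Proof. rewrite /sb; case: (eqVneq i j) => // *; exact: (s_M HC). Qed.
Lemma sb_J i j x y : i < m -> sb i j (J x y) = J (sb i j x) (sb i j y).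
Proof. rewrite /sb; case: (eqVneq i j) => // *; exact: (s_add HC). Qed.
Lemma sb_Z i j : i < m -> sb i j Z = Z.
Proof. rewrite /sb; case: (eqVneq i j) => // *; exact: (s_Z HC). Qed.
Lemma sb_U i j : i < m -> j < m -> sb i j U = U.
Proof. rewrite /sb; case: (eqVneq i j) => // *; exact: (s_U HC). Qed.
Lemma sb_mono i j x y : i < m -> le x y -> le (sb i j x) (sb i j y).
Proof. rewrite /sb; case: (eqVneq i j) => // *; exact: (s_mono HC). Qed.
Lemma sb_id i j y : i < m -> j < m -> c i y = y -> sb i j y = y.
Proof. rewrite /sb; case: (eqVneq i j) => // *; exact: (s_id HC). Qed.
Lemma c_sb_comm i j k y : i < m -> j < m -> k < m -> k != i -> k != j ->
  c k (sb i j y) = sb i j (c k y).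
Proof. rewrite /sb; case: (eqVneq i j) => // *; exact: (c_s_comm HC). Qed.
Lemma cs_sb i j y : i < m -> i != j -> c i (sb i j y) = sb i j y.
Proof. rewrite /sb; case: (eqVneq i j) => // *; exact: (cs_s HC). Qed.
Lemma sb_bound i j y : i < m -> j < m -> i != j -> c j y = y -> c j (sb i j y) = c i y.
Proof. rewrite /sb; case: (eqVneq i j) => // *; exact: (s_bound HC). Qed.
Lemma sb_chain i j k y : i < m -> j < m -> k < m -> i != j -> j != k ->
  c j y = y -> sb j k (sb i j y) = sb i k y.
Proof.
move=> hi hj hk hij hjk hy; rewrite /sb (negbTE hij) (negbTE hjk).
case: eqVneq => [<-|hik]; first exact: (s_back HC).
exact: (s_chain HC).
Qed.
Lemma sb_comm a b e f y : a < m -> b < m -> e < m -> f < m ->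
  e != a -> e != b -> a != f ->
  sb a b (sb e f y) = sb e f (sb a b y).
Proof.
rewrite /sb => *; case: (eqVneq a b) => // hab; case: (eqVneq e f) => // hef.
exact: (s_comm HC).
Qed.

Lemma lt0 : 0 < m. Proof. by apply: leq_trans hm. Qed.
Lemma lt1 : 1 < m. Proof. by apply: leq_trans hm. Qed.
Lemma lt2 : 2 < m. Proof. by apply: leq_trans hm. Qed.
Lemma lt3 : 3 < m. Proof. by apply: leq_trans hm. Qed.
Hint Resolve lt0 lt1 lt2 lt3 : core.

Lemma F_M x y i j : i < m -> j < m -> F (M x y) i j = M (F x i j) (F y i j).
Proof. by move=> hi hj; rewrite /F !sb_M. Qed.
Lemma F_J x y i j : F (J x y) i j = J (F x i j) (F y i j).
Proof. by rewrite /F !sb_J. Qed.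
Lemma F_Z i j : F Z i j = Z.
Proof. by rewrite /F !sb_Z. Qed.
Lemma F_U i j : i < m -> j < m -> F U i j = U.
Proof. by move=> hi hj; rewrite /F !sb_U. Qed.
Lemma F_mono x y i j : le x y -> le (F x i j) (F y i j).
Proof. by move=> h; rewrite /F; apply: sb_mono => //; apply: sb_mono. Qed.

Lemma c_sb1 x j k : Two x -> j < m -> k < m -> k != 0 -> k != j -> c k (sb 1 j x) = sb 1 j x.
Proof.
move=> hx hj hk hk0 hkj; case: (eqVneq k 1) => [e|hk1]; first by subst k; apply: cs_sb.
rewrite c_sb_comm // hx //. by case: k hk hk0 hk1 {hkj} => [|[|k]].
Qed.

Lemma FM1 x i j k : Two x -> i < m -> j < m -> k < m -> i != j -> k != i -> k != j ->
  c k (F x i j) = F x i j.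
Proof.
move=> hx hi hj hk hij hki hkj; rewrite /F.
case: (eqVneq k 0) => [e|hk0].
  by subst k; apply: cs_sb.
case: (eqVneq k 1) => [e|hk1].
  by subst k; rewrite c_sb_comm // cs_sb.
rewrite c_sb_comm // c_sb_comm // hx //.
by case: k hk hk0 hk1 {hki hkj} => [|[|k]].
Qed.

Lemma FM2 x i j l : Two x -> i < m -> j < m -> l < m -> i != j -> l != i -> l != j ->
  j != 0 -> sb i l (F x i j) = F x l j.
Proof.
move=> hx hi hj hl hij hli hlj hj0; rewrite /F.
case: (eqVneq i 0) => [e|hi0]; first by subst i; rewrite sb_ii.
rewrite sb_chain // 1?eq_sym //.
by apply: c_sb1.
Qed.

Lemma FM3 x i j l : Two x -> i < m -> j < m -> l < m -> i != j -> l != i -> l != j ->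
  j != 0 -> l != 0 -> sb j l (F x i j) = F x i l.
Proof.
move=> hx hi hj hl hij hli hlj hj0 hl0; rewrite /F.
case: (eqVneq j 1) => [e|hj1].
  subst j; rewrite sb_ii sb_comm //; last by rewrite eq_sym.
  by rewrite eq_sym.
rewrite sb_comm // 1?eq_sym // sb_chain // 1?eq_sym //.
apply: hx; by case: j hj hj0 hj1 {hij hlj} => [|[|j]].
Qed.

Definition Q y z w i j k := le (c j (M (F y i j) (F z j k))) (F w i k).

Lemma c_closedM2 k x y : k < m -> c k x = x -> c k y = y -> c k (M x y) = M x y.
Proof. by move=> hk hx hy; rewrite (c_closedM HC) // hx. Qed.

Section Moves.
Variables (y z w : D).
Hypotheses (hy : Two y) (hz : Two z) (hw : Two w).

Lemma moveI i j k l : i < m -> j < m -> k < m -> l < m ->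
  i != j -> i != k -> j != k -> j != 0 -> k != 0 -> l != i -> l != j -> l != k ->
  Q y z w i j k -> Q y z w l j k.
Proof.
move=> hi hj hk hl hij hik hjk hj0 hk0 hli hlj hlk hQ.
have := @sb_mono i l _ _ hi hQ.
rewrite -c_sb_comm // 1?eq_sym // sb_M // FM2 // (sb_id (y:=F z j k)) //.
  by rewrite FM2.
by apply: FM1 => //; rewrite eq_sym.
Qed.

Lemma moveJ i j k l : i < m -> j < m -> k < m -> l < m ->
  i != j -> i != k -> j != k -> j != 0 -> k != 0 -> l != i -> l != j -> l != k -> l != 0 ->
  Q y z w i j k -> Q y z w i l k.
Proof.
move=> hi hj hk hl hij hik hjk hj0 hk0 hli hlj hlk hl0 hQ.
rewrite /Q -(FM3 (x:=y) (i:=i) (j:=j)) // -(FM2 (x:=z) (i:=j) (j:=k)) // 1?eq_sym //.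
rewrite -sb_M // sb_bound // 1?eq_sym //.
apply: c_closedM2 => //; apply: FM1 => //.
Qed.

Lemma moveK i j k l : i < m -> j < m -> k < m -> l < m ->
  i != j -> i != k -> j != k -> j != 0 -> k != 0 -> l != i -> l != j -> l != k -> l != 0 ->
  Q y z w i j k -> Q y z w i j l.
Proof.
move=> hi hj hk hl hij hik hjk hj0 hk0 hli hlj hlk hl0 hQ.
have := @sb_mono k l _ _ hk hQ.
rewrite -c_sb_comm // 1?eq_sym // sb_M // (sb_id (y:=F y i j)) //.
  by rewrite FM3 // FM3.
by apply: FM1 => //; rewrite eq_sym.
Qed.

Lemma fresh a b e : exists f, [/\ 0 < f < m, f != a, f != b & f != e].
Proof.
have [h1|h1] := boolP ((1 != a) && (1 != b) && (1 != e)).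
  by exists 1; case/andP: h1 => /andP[-> ->] ->; rewrite lt1.
have [h2|h2] := boolP ((2 != a) && (2 != b) && (2 != e)).
  by exists 2; case/andP: h2 => /andP[-> ->] ->; rewrite lt2.
have [h3|h3] := boolP ((3 != a) && (3 != b) && (3 != e)).
  by exists 3; case/andP: h3 => /andP[-> ->] ->; rewrite lt3.
exists 4; move: h1 h2 h3; rewrite !negb_and !negbK => h1 h2 h3.
split; lia.
Qed.

Hypothesis base : Q y z w 0 2 1.

Lemma reach1 i : i < m -> exists b e, [/\ b < m, e < m, i != b, i != e & [/\ b != e, b != 0, e != 0 & Q y z w i b e]].
Proof.
move=> hi.
case: (eqVneq i 0) => [->|hi0]; first by exists 2, 1.
case: (eqVneq i 1) => [->|hi1].
  exists 2, 3; split => //; split => //.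
  apply: (moveI (i:=0)) => //.
  by apply: (moveK (k:=1)).
case: (eqVneq i 2) => [->|hi2].
  exists 3, 1; split => //; split => //.
  apply: (moveI (i:=0)) => //.
  by apply: (moveJ (j:=2)).
exists 2, 1; split => //; split => //.
by apply: (moveI (i:=0)) => //; rewrite 1?eq_sym.
Qed.

Lemma reach i j k : i < m -> j < m -> k < m -> i != j -> i != k -> j != k ->
  j != 0 -> k != 0 -> Q y z w i j k.
Proof.
move=> hi hj hk hij hik hjk hj0 hk0.
have [b [e [hb he hib hie [hbe hb0 he0 hQ]]]] := reach1 hi.
have [e' [he' hie' hje' he'0 hQ2]] : exists e', [/\ e' < m, i != e', j != e', e' != 0 & Q y z w i j e'].
  case: (eqVneq b j) => [<-|hbj]; first by exists e.
  case: (eqVneq j e) => [hje|hje].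
    subst e.
    have [f [/andP [f0 fm] hfi hfb hfe]] := fresh i b j.
    have hf0 : f != 0 by rewrite -lt0n.
    have hQ' : Q y z w i b f by apply: (moveK (k:=j)) => //; try by rewrite eq_sym.
    exists f; split => //; try by rewrite eq_sym.
    by apply: (moveJ (j:=b)) => //; try by rewrite eq_sym.
  exists e; split => //.
  by apply: (moveJ (j:=b)) => //; rewrite eq_sym.
case: (eqVneq e' k) => [<-//|he'k].
by apply: (moveK (k:=e')) => //; rewrite eq_sym.
Qed.
End Moves.
End F.

Section NA.
Variables (T : finType) (o : NAops T).
Hypothesis HNA : is_NA o.
Hypothesis Hsym : symmetric_in o [set: T].
Local Notation J := (na_jn o). Local Notation M := (na_mt o).
Local Notation C := (na_cp o). Local Notation Z := (na_zr o).
Local Notation U := (na_un o). Local Notation cmp := (na_comp o).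
Local Notation cv := (na_conv o). Local Notation I := (na_id o).
Local Notation le := (le J).
Let HB : is_BA J M C Z U := HNA.1.

Lemma na_leP x y : na_le o x y <-> le x y.
Proof. by rewrite /na_le; split => [/eqP|->]. Qed.

Lemma cv_id x : cv x = x. Proof. by apply: Hsym; rewrite in_setT. Qed.
Lemma cmpC x y : cmp x y = cmp y x.
Proof. by case: HNA => _ [_ [_ [_ [_ [h _]]]]]; rewrite -[cmp x y]cv_id h !cv_id. Qed.
Lemma cmpDl x y z : cmp (J x y) z = J (cmp x z) (cmp y z).
Proof. by case: HNA => _ [h _]. Qed.
Lemma cmp1 x : cmp x I = x. Proof. by case: HNA => _ [_ [h _]]. Qed.
Lemma cmp1l x : cmp I x = x. Proof. by rewrite cmpC cmp1. Qed.
Lemma tarski x y : le (cmp x (C (cmp x y))) (C y).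
Proof.
case: HNA => _ [_ [_ [_ [_ [_ h]]]]]. by have := h x y; rewrite cv_id.
Qed.
Lemma cmp_monol x x' z : le x x' -> le (cmp x z) (cmp x' z).
Proof.
move=> h; have e : J x x' = x' := h.
rewrite -e cmpDl; exact: (le_jl HB).
Qed.
Lemma cmp_mono x x' z z' : le x x' -> le z z' -> le (cmp x z) (cmp x' z').
Proof.
move=> h1 h2; apply: (le_trans HB (cmp_monol z h1)).
by rewrite cmpC (cmpC x'); apply: cmp_monol.
Qed.
Lemma peirce x y z : M (cmp x y) z = Z -> M (cmp x z) y = Z.
Proof.
move=> h.
have h1 : le z (C (cmp x y)) by apply: (le_compl HB); rewrite (CC HB) (mC HB).
have h2 : le (cmp x z) (C y).
  apply: (le_trans HB) (tarski x y); apply: cmp_mono => //; exact: (le_refl HB).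
by move/(le_complE HB): h2; rewrite (CC HB).
Qed.

Lemma atomP (E : {set T}) a y : atom_in o E a -> y \in E -> le y a -> y = Z \/ y = a.
Proof.
case/and3P => _ _ /forall_inP h hy hle.
have := h y hy; rewrite /na_le hle eqxx /= => /orP [] /eqP; by [left|right].
Qed.
Lemma atom_nz (E : {set T}) a : atom_in o E a -> a <> Z.
Proof. by case/and3P => _ /eqP. Qed.
Lemma atom_in_E (E : {set T}) a : atom_in o E a -> a \in E.
Proof. by case/and3P. Qed.
Lemma atom_meet a x : atom_in o [set: T] a -> M a x <> Z -> le a x.
Proof.
move=> ha hnz; have [e|e] := atomP ha (in_setT (M a x)) (le_ml HB a x) => //.
by apply/(leM HB).
Qed.
Lemma atoms_disj a b : atom_in o [set: T] a -> atom_in o [set: T] b -> a <> b -> M a b = Z.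
Proof.
move=> ha hb hab; case: (atomP ha (in_setT (M a b)) (le_ml HB a b)) => // e.
have hle : le a b by apply/(leM HB).
by case: (atomP hb (in_setT a) hle) => h; [case: (atom_nz ha)|case: hab].
Qed.
Lemma atom_join a x y : atom_in o [set: T] a -> le a (J x y) -> le a x \/ le a y.
Proof.
move=> ha h.
have [hx|hx] := boolP (M a x == Z); last by left; apply: atom_meet => // /eqP; apply/negP.
have [hy|hy] := boolP (M a y == Z); last by right; apply: atom_meet => // /eqP; apply/negP.
exfalso; apply: (atom_nz ha).
move/(leM HB): h => <-. by rewrite (mD HB) (eqP hx) (eqP hy) (j0 HB).
Qed.
Lemma atom_le_atom a b : atom_in o [set: T] a -> atom_in o [set: T] b -> le a b -> a = b.
Proof.
move=> ha hb h; by case: (atomP hb (in_setT a) h) => // e; case: (atom_nz ha).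
Qed.

Hypothesis HidA : atom_in o [set: T] I.
Lemma id_le_bb b : b <> Z -> le I (cmp b b).
Proof.
move=> hb; apply: (le_trans HB (le_refl HB I)).
have [h|h] := boolP (M I (cmp b b) == Z).
  exfalso; apply: hb; have := peirce (x:=b) (y:=b) (z:=I); rewrite cmp1 (mm HB) => -> //.
  by rewrite (mC HB); apply/eqP.
by apply: atom_meet => // /eqP; apply/negP.
Qed.
Lemma id_le_b1 b : b <> Z -> le I (cmp b U).
Proof. move=> hb; apply: (le_trans HB (id_le_bb hb)); apply: cmp_mono; [exact: (le_refl HB)|exact: (le1 HB)]. Qed.

Variable E : {set T}.
Hypothesis HE : subalgebra o E.
Hypothesis HidE : atom_in o E I.

Lemma E0 : Z \in E. Proof. by case: HE. Qed.
Lemma E1 : U \in E. Proof. by case: HE => _ []. Qed.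
Lemma EI : I \in E. Proof. by case: HE => _ [_ []]. Qed.
Lemma EJ x y : x \in E -> y \in E -> J x y \in E. Proof. by case: HE => _ [_ [_ [h _]]]; apply: h. Qed.
Lemma EM x y : x \in E -> y \in E -> M x y \in E. Proof. by case: HE => _ [_ [_ [_ [h _]]]]; apply: h. Qed.
Lemma EC x : x \in E -> C x \in E. Proof. by case: HE => _ [_ [_ [_ [_ [h _]]]]]; apply: h. Qed.

Lemma Eatom_div e : atom_in o E e -> e <> I -> le e (C I).
Proof.
move=> he hne; apply: (le_compl HB); rewrite (CC HB).
have hm : M e I \in E by apply: EM; [exact: atom_in_E he|exact: EI].
case: (atomP HidE hm (le_mr HB e I)) => // h.
have hle : le I e by apply/(leM HB); rewrite (mC HB).
by case: (atomP he EI hle) => h2; [case: (atom_nz HidE h2)|case: hne].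
Qed.

Lemma exists_atom_below x : x \in E -> x <> Z -> exists e, atom_in o E e /\ le e x.
Proof.
move=> hx; move: {2}#|[set y in E | na_le o y x]| (leqnn #|[set y in E | na_le o y x]|) => n.
elim: n x hx => [|n IH] x hx hn hnz.
  have hx' : x \in [set y in E | na_le o y x] by rewrite inE hx; apply/na_leP; exact: (le_refl HB).
  by move: hn; rewrite leqn0 => /eqP /cards0_eq h0; rewrite h0 inE in hx'.
have [ha|ha] := boolP (atom_in o E x); first by exists x; split => //; exact: (le_refl HB).
have : ~~ [forall y in E, na_le o y x ==> (y == Z) || (y == x)].
  by move: ha; rewrite /atom_in hx /=; case: eqP.
rewrite negb_forall_in => /existsP [y /andP [hy]]; rewrite negb_imply negb_or => /and3P [hyx hy0 hyx'].
have hyx2 : le y x by apply/na_leP.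
have [e [he hey]] : exists e, atom_in o E e /\ le e y.
  apply: (IH y hy) => //; last by move/eqP: hy0.
  have hsub : [set z in E | na_le o z y] \proper [set z in E | na_le o z x].
    apply/properP; split.
      apply/subsetP => z; rewrite !inE => /andP [-> /na_leP h]; apply/na_leP.
      exact: (le_trans HB h hyx2).
    exists x; first by rewrite inE hx; apply/na_leP; exact: (le_refl HB).
    rewrite inE hx /=; apply/negP => /na_leP h.
    by move/negP: hyx'; apply; apply/eqP; apply: (le_anti HB).
  by rewrite -ltnS; apply: leq_trans hn; apply: proper_card.
by exists e; split => //; apply: (le_trans HB hey).
Qed.

Lemma foldr_J_le (l : seq T) x : x \in l -> le x (foldr J Z l).
Proof.
elim: l => [//|h t IH]; rewrite inE => /orP [/eqP ->|hx] /=; first exact: (le_jl HB).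
apply: (le_trans HB (IH hx)); exact: (le_jr HB).
Qed.

Lemma atoms_sum : foldr J Z (enum [set x | atom_in o E x]) = U.
Proof.
have hsE : forall l : seq T, all (fun x => x \in E) l -> foldr J Z l \in E.
  elim => [|h t IH] /=; first by move=> _; exact: E0.
  by case/andP => h1 h2; exact: EJ h1 (IH h2).
have hL : all (fun x => x \in E) (enum [set x | atom_in o E x]).
  by apply/allP => x; rewrite mem_enum inE; exact: atom_in_E.
have hs := hsE _ hL.
apply: (le_anti HB); first exact: (le1 HB).
case: (eqVneq (C (foldr J Z (enum [set x | atom_in o E x]))) Z) => [e|hne].
  by rewrite -(CC HB (foldr _ _ _)) e (C0 HB); exact: (le_refl HB).
exfalso.
have [e [he hle]] := exists_atom_below (EC hs) (fun h => negP hne (introT eqP h)).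
have hle2 : le e (foldr J Z (enum [set x | atom_in o E x])).
  by apply: foldr_J_le; rewrite mem_enum inE.
apply: (atom_nz he); apply: (le0E HB); rewrite -(mN HB (foldr J Z (enum [set x | atom_in o E x]))).
exact: (le_mglb HB).
Qed.
End NA.

Section Core.
Variables (T : finType) (o : NAops T) (E : {set T}) (p : nat) (u : T) (SU : {set T}).
Local Notation JA := (na_jn o). Local Notation MA := (na_mt o).
Local Notation CA := (na_cp o). Local Notation ZA := (na_zr o).
Local Notation UA := (na_un o). Local Notation cmp := (na_comp o).
Local Notation I := (na_id o).
Local Notation leA := (le JA).
Hypothesis HNA : is_NA o.
Hypothesis Hsym : symmetric_in o [set: T].
Hypothesis HidA : atom_in o [set: T] I.
Hypothesis HE : subalgebra o E.
Hypothesis HidE : atom_in o E I.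
Hypothesis Hcard : #|[set x | atom_in o E x]| = p.
Hypothesis Hp : 3 < p.
Hypothesis Hno1 : forall v, atom_in o E v -> na_le o v (na_div o) -> MA (cmp v v) v = ZA.
Hypothesis Hu : atom_in o E u.
Hypothesis Hudiv : na_le o u (na_div o).
Hypothesis HSU : forall a, a \in SU -> atom_in o [set: T] a /\ leA a u.
Hypothesis HSUc : p ^ (p - 1) <= #|SU|.

Variables (D : Type) (oD : CAops D).
Local Notation JD := (ca_jn oD). Local Notation MD := (ca_mt oD).
Local Notation CD := (ca_cp oD). Local Notation ZD := (ca_zr oD).
Local Notation UD := (ca_un oD). Local Notation c := (ca_c oD).
Local Notation s := (ca_s oD).
Local Notation leD := (le JD).
Hypothesis HC : is_CA p.+1 oD.
Variable g : T -> D.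
Hypothesis G0 : UD <> ZD.
Hypothesis G1 : forall a, Two oD p.+1 (g a).
Hypothesis GJ : forall a b, g (JA a b) = JD (g a) (g b).
Hypothesis GM : forall a b, g (MA a b) = MD (g a) (g b).
Hypothesis GZ : g ZA = ZD.
Hypothesis GU : g UA = UD.
Hypothesis G5 : forall y z, leD (c 2 (MD (s 1 2 (g y)) (s 0 2 (g z)))) (g (cmp y z)).
Hypothesis G6 : forall b, atom_in o [set: T] b -> c 1 (g b) = UD.

Let HBA : is_BA JA MA CA ZA UA := HNA.1.
Let HBD : is_BA JD MD CD ZD UD := HC.1.
Let hm : 4 < p.+1. Proof. by apply: leq_trans Hp _. Qed.

Definition Fg a i j := F oD (g a) i j.

Lemma TN x y z i j k w : i < p.+1 -> j < p.+1 -> k < p.+1 -> i != j -> i != k -> j != k ->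
  j != 0 -> k != 0 -> w <> ZD -> leD w (Fg y i j) -> leD w (Fg z j k) -> leD w (Fg x i k) ->
  MA x (cmp y z) <> ZA.
Proof.
move=> hi hj hk hij hik hjk hj0 hk0 hw h1 h2 h3 hxyz.
have hQ : Q oD (g y) (g z) (g (cmp y z)) i j k.
  apply: (reach HC hm) => //; exact: G5.
set P := MD (MD (Fg y i j) (Fg z j k)) (Fg x i k).
have hP : leD w P by apply: (le_mglb HBD) => //; apply: (le_mglb HBD).
have hcP : c j P = MD (c j (MD (Fg y i j) (Fg z j k))) (Fg x i k).
  by apply: (c_closedM HC) => //; apply: (FM1 HC hm) => //; rewrite eq_sym.
have : leD (c j P) (Fg (MA (cmp y z) x) i k).
  rewrite hcP /Fg GM (F_M HC hm) //; apply: (leM2 HBD) => //; exact: (le_refl HBD).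
rewrite (mC HBA) hxyz /Fg GZ (F_Z HC hm) => /(le0E HBD) hc.
apply: hw; apply: (le0E HBD); apply: (le_trans HBD hP).
by rewrite -hc; apply: (cinc HC).
Qed.

Fixpoint PF (cs : seq T) (st l : nat) : D :=
  if cs is e :: cs' then MD (Fg e st l) (PF cs' st.+1 l) else UD.

Lemma PF_le cs st l i : i < size cs -> leD (PF cs st l) (Fg (nth ZA cs i) (st + i) l).
Proof.
elim: cs st i => [//|e cs IH] st [|i] /= hi; first by rewrite addn0; exact: (le_ml HBD).
apply: (le_trans HBD (le_mr HBD _ _)); rewrite -addSnnS; exact: IH.
Qed.

Lemma PF_closed cs st l q : 0 < st -> st + size cs <= l -> l < p.+1 ->
  st + size cs <= q -> q < p.+1 -> q != l -> c q (PF cs st l) = PF cs st l.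
Proof.
elim: cs st => [|e cs IH] st /= hst hl hlm hq hqm hql; first exact: (cU HC).
rewrite -addSnnS in hl hq.
apply: (c_closedM2 HC) => //; last by apply: IH.
apply: (FM1 HC hm) => //; lia.
Qed.

Lemma PF_sub cs st l q : 0 < st -> st + size cs <= l -> l < p.+1 ->
  st + size cs <= q -> q < p.+1 -> q != l -> sb oD l q (PF cs st l) = PF cs st q.
Proof.
elim: cs st => [|e cs IH] st /= hst hl hlm hq hqm hql; first exact: (sb_U HC).
rewrite -addSnnS in hl hq.
rewrite (sb_M HC) // IH //.
have hst' : st < l by apply: leq_trans hl; rewrite ltnS leq_addr.
have hsq : st < q by apply: leq_trans hq; rewrite ltnS leq_addr.
rewrite /Fg (FM3 HC hm) //; lia.
Qed.

Lemma PF_rcons cs e st l : PF (rcons cs e) st l = MD (PF cs st l) (Fg e (st + size cs) l).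
Proof.
elim: cs st => [|e' cs IH] st /=; first by rewrite addn0 (m1 HBD) (m1l HBD).
by rewrite IH addSnnS (mA HBD).
Qed.

Local Notation atE := [set x | atom_in o E x].

Lemma sumF q l : q < p.+1 -> l < p.+1 ->
  foldr JD ZD (map (fun e => Fg e q l) (enum atE)) = UD.
Proof.
move=> hq hl.
have h : forall l0 : seq T, foldr JD ZD (map (fun e => Fg e q l) l0) = Fg (foldr JA ZA l0) q l.
  elim => [|e r IH] /=; first by rewrite /Fg GZ (F_Z HC hm).
  by rewrite IH /Fg GJ (F_J HC hm).
by rewrite h (atoms_sum HNA HE) /Fg GU (F_U HC hm).
Qed.

Lemma distr (w Yv : D) (f : T -> D) (l0 : seq T) k : k < p.+1 ->
  MD w (c k (MD Yv (foldr JD ZD (map f l0)))) =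
  foldr JD ZD (map (fun e => MD w (c k (MD Yv (f e)))) l0).
Proof.
move=> hk; elim: l0 => [|e r IH] /=; first by rewrite (m0 HBD) (cZ HC) // (m0 HBD).
by rewrite (mD HBD) (c_add HC) // (mD HBD) IH.
Qed.

Lemma foldr_nz (f : T -> D) l0 : foldr JD ZD (map f l0) <> ZD -> exists2 e, e \in l0 & f e <> ZD.
Proof.
elim: l0 => [//|e r IH] /= h.
case: (classic (f e = ZD)) => [he|he]; last by exists e; rewrite ?inE ?eqxx.
rewrite he (j0l HBD) in h; have [e' he' hf] := IH h.
by exists e'; rewrite // inE he' orbT.
Qed.

Lemma exists_color w Yv q : q < p.+1 -> w <> ZD -> leD w (c p Yv) ->
  exists e, e \in atE /\ MD w (c p (MD Yv (Fg e q p))) <> ZD.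
Proof.
move=> hq hw /(leM HBD) h.
rewrite -[Yv](m1 HBD) -(sumF hq (ltnSn p)) distr // in h.
have [e he hne] : exists2 e, e \in enum atE & MD w (c p (MD Yv (Fg e q p))) <> ZD.
  by apply: foldr_nz; rewrite h.
by exists e; split => //; rewrite mem_enum in he.
Qed.

Lemma refine q (Y : T -> D) (bs : seq T) dd : q < p.+1 -> dd <> ZD ->
  (forall b, b \in bs -> leD dd (c p (Y b))) ->
  exists dd' (col : T -> T), [/\ dd' <> ZD, leD dd' dd &
    forall b, b \in bs -> col b \in atE /\ leD dd' (c p (MD (Y b) (Fg (col b) q p)))].
Proof.
move=> hq; elim: bs dd => [|b bs IH] dd hdd hb.
  by exists dd, id; split => //; exact: (le_refl HBD).
have [e [he hne]] := exists_color hq hdd (hb b (mem_head _ _)).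
set dd1 := MD dd (c p (MD (Y b) (Fg e q p))).
have hdd1 : leD dd1 dd := le_ml HBD _ _.
have [dd' [col' [h1 h2 h3]]] : exists dd' (col : T -> T), [/\ dd' <> ZD, leD dd' dd1 &
    forall b, b \in bs -> col b \in atE /\ leD dd' (c p (MD (Y b) (Fg (col b) q p)))].
  apply: IH => // b' hb'; apply: (le_trans HBD hdd1); apply: hb; by rewrite inE hb' orbT.
exists dd', (fun x => if x == b then e else col' x); split => //.
  exact: (le_trans HBD h2 hdd1).
move=> b' hb'; have [eb|hneb] := eqVneq b' b.
  subst b'; split => //.
  exact: (le_trans HBD h2 (le_mr HBD _ _)).
apply: h3.
by move: hb'; rewrite inE (negbTE hneb).
Qed.

Lemma pigeon (S Cs : {set T}) (col : T -> T) P :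
  (forall b, b \in S -> col b \in Cs) ->
  (forall e, e \in Cs -> #|[set b in S | col b == e]| <= P) -> #|S| <= #|Cs| * P.
Proof.
move=> h1 h2.
rewrite -sum1_card (partition_big col (fun e => e \in Cs)) //=.
rewrite -sum_nat_const; apply: leq_sum => e he.
by rewrite sum1dep_card; exact: h2.
Qed.

Lemma uI : u <> I.
Proof.
move=> e; apply: (atom_nz HidA).
have h : leA I (CA I) by rewrite -{1}e; apply/na_leP; exact: Hudiv.
by move/(leM HBA): h; rewrite (mN HBA) => <-.
Qed.

Definition Inv k := exists dd (cs : seq T) (S : {set T}),
  [/\ dd <> ZD, size cs = k, uniq cs &
      (forall e, e \in cs -> [/\ atom_in o E e, e <> I & e <> u])] /\
  [/\ S \subset SU, p ^ (p - 1 - k) <= #|S| &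
      (forall b, b \in S -> leD dd (c p (MD (Fg b 0 p) (PF cs 1 p))))].

Lemma Inv0 : Inv 0.
Proof.
exists UD, [::], SU; split; split => //.
  by rewrite subn0.
move=> b hb /=; rewrite (m1 HBD).
have [hbA _] := HSU hb.
rewrite /Fg /F sb_ii /sb.
have -> : (1 == p) = false by apply/negbTE; rewrite neq_ltn; apply/orP; left; apply: leq_trans Hp.
rewrite (s_bound HC) //; try lia.
  by rewrite G6 //; exact: (le_refl HBD).
by apply: G1; lia.
Qed.

Lemma step k : k <= p - 2 -> Inv k -> k < p - 2 /\ Inv k.+1.
Proof.
move=> hk [dd [cs [S [[hdd hsz huq hcs] [hS hcard hb]]]]].
have hqp : k.+1 < p by clear -hk Hp; lia.
have hqm : k.+1 < p.+1 by clear -hqp; lia.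
have hpm : p < p.+1 by clear; lia.
have hp0 : p != 0 by clear -Hp; lia.
have h0p : 0 != p by clear -Hp; lia.
have hqp' : k.+1 != p by clear -hqp; lia.
have hpq' : p != k.+1 by clear -hqp; lia.
have hs1 : 1 + size cs <= p by clear -hsz hqp; lia.
have hs2 : 1 + size cs <= k.+1 by clear -hsz; lia.
have hSU' : forall b, b \in S -> atom_in o [set: T] b /\ leA b u.
  by move=> b hbS; apply: HSU; apply: (subsetP hS).
have hS0 : 0 < #|S|.
  apply: leq_trans hcard; rewrite expn_gt0; apply/orP; left; clear -Hp; lia.
case/card_gt0P: (hS0) => a haS.
pose Yb b := MD (Fg b 0 p) (PF cs 1 p).
have hYq : forall b, c k.+1 (Yb b) = Yb b.
  move=> b; apply: (c_closedM2 HC) => //.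
    by apply: (FM1 HC hm).
  by apply: PF_closed.
set d0 := c k.+1 dd.
have hd0 : d0 <> ZD by apply: (nz_mono HBD (cinc HC dd hqm)).
have hd0b : forall b, b \in S -> leD d0 (c p (Yb b)).
  move=> b hbS.
  have -> : c p (Yb b) = c k.+1 (c p (Yb b)) by rewrite (c4 HC) // hYq.
  by apply: (c_mono HC) => //; exact: hb.
set X' := MD (Fg a 0 k.+1) (PF cs 1 k.+1).
have hX : c k.+1 X' = c p (Yb a).
  have -> : X' = sb oD p k.+1 (Yb a).
    by rewrite /Yb (sb_M HC) // PF_sub // /Fg (FM3 HC hm).
  by rewrite (sb_bound HC) //; exact: hYq.
have hd1 : MD d0 X' <> ZD.
  apply: (conjP HC hqm) => //; first exact: (cc HC).
  by rewrite hX; exact: hd0b.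
set d1 := MD d0 X'.
have hd1X : leD d1 X' := le_mr HBD d0 X'.
have hd1b : forall b, b \in enum (S :\ a) -> leD d1 (c p (Yb b)).
  move=> b; rewrite mem_enum in_setD1 => /andP [_ hbS].
  by apply: (le_trans HBD (le_ml HBD d0 X')); exact: hd0b.
have [dd' [col [hdd' hdd'1 hcol]]] := refine (Y := Yb) hqm hd1 hd1b.
have hX'p : c p X' = X'.
  apply: (c_closedM2 HC) => //.
    by apply: (FM1 HC hm).
  by apply: PF_closed.
set Bs := I |: (u |: [set x in cs]).
set Cs := atE :\: Bs.
have excl : forall b, b \in S :\ a -> col b \in Cs.
  move=> b hb'; move: (hb'); rewrite in_setD1 => /andP [hba hbS].
  have [hca hle] : col b \in atE /\ leD dd' (c p (MD (Yb b) (Fg (col b) k.+1 p))) by apply: hcol; rewrite mem_enum.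
  set e := col b in hca hle *.
  set W := MD X' (MD (Yb b) (Fg e k.+1 p)).
  have hW : W <> ZD.
    apply: (c_nz HC (i := p)) => //.
    have h : leD dd' (c p W).
      rewrite /W (c_closedMl HC) //; apply: (le_mglb HBD) => //.
      exact: (le_trans HBD hdd'1 hd1X).
    exact: (nz_mono HBD h hdd').
  have hWa : leD W (Fg a 0 k.+1) by apply: (le_trans HBD (le_ml HBD _ _)); exact: (le_ml HBD).
  have hWcq : leD W (PF cs 1 k.+1) by apply: (le_trans HBD (le_ml HBD _ _)); exact: (le_mr HBD).
  have hWY : leD W (Yb b) by apply: (le_trans HBD (le_mr HBD _ _)); exact: (le_ml HBD).
  have hWb : leD W (Fg b 0 p) by apply: (le_trans HBD hWY); exact: (le_ml HBD).
  have hWcp : leD W (PF cs 1 p) by apply: (le_trans HBD hWY); exact: (le_mr HBD).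
  have hWe : leD W (Fg e k.+1 p) by apply: (le_trans HBD (le_mr HBD _ _)); exact: (le_mr HBD).
  have [hbA hbu] := hSU' b hbS; have [haA hau] := hSU' a haS.
  rewrite in_setD hca andbT /Bs !in_setU1 inE.
  apply/negP => /or3P [/eqP heI | /eqP heu | hecs].
  - have := TN (x := b) (y := a) (z := e) (i := 0) (j := k.+1) (k := p) (w := W).
    move=> h; apply: h => //.
    rewrite heI (cmp1 HNA) (mC HBA) (atoms_disj HNA haA hbA) //.
    by move=> eab; move/eqP: hba; apply; rewrite eab.
  - have := TN (x := b) (y := a) (z := e) (i := 0) (j := k.+1) (k := p) (w := W).
    move=> h; apply: h => //.
    rewrite heu; apply: (le0E HBA); rewrite -(Hno1 Hu Hudiv) (mC HBA (cmp u u)).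
    by apply: (leM2 HBA) => //; apply: (cmp_mono HNA Hsym) => //; exact: (le_refl HBA).
  - have hi : index e cs < size cs by rewrite index_mem.
    have hnth : nth ZA cs (index e cs) = e by apply: nth_index.
    have [heE heI heu] := hcs e hecs.
    have hi1 : 1 + index e cs < p.+1 by clear -hi hsz hqp; lia.
    have hi2 : 1 + index e cs != k.+1 by clear -hi hsz; lia.
    have hi3 : 1 + index e cs != p by clear -hi hsz hqp; lia.
    have := TN (x := e) (y := e) (z := e) (i := 1 + index e cs) (j := k.+1) (k := p) (w := W).
    move=> h; apply: h => //.
    + by rewrite -{1}hnth; exact: (le_trans HBD hWcq (PF_le _ _ hi)).
    + by rewrite -{1}hnth; exact: (le_trans HBD hWcp (PF_le _ _ hi)).
    + rewrite (mC HBA) Hno1 //; apply/na_leP; exact: (Eatom_div HNA HE HidE).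
have hBsub : Bs \subset atE.
  apply/subsetP => x; rewrite /Bs !in_setU1 inE => /or3P [/eqP -> | /eqP -> | hx]; rewrite inE.
  - exact: HidE.
  - exact: Hu.
  - by have [] := hcs x hx.
have hIu : I \notin u |: [set x in cs].
  rewrite in_setU1 inE negb_or; apply/andP; split.
    by apply/eqP => e; exact: uI (esym e).
  by apply/negP => /hcs [_ h _].
have hucs : u \notin [set x in cs].
  by rewrite inE; apply/negP => /hcs [_ _ h].
have hcB : #|Bs| = k.+2.
  by rewrite /Bs cardsU1 hIu cardsU1 hucs cardsE (card_uniqP huq) hsz !add1n.
have hcC : #|Cs| = p - k.+2.
  by rewrite /Cs cardsD (setIidPr hBsub) hcB Hcard.
have hSa : p ^ (p - 1 - k) - 1 <= #|S :\ a|.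
  have := cardsD1 a S; rewrite haS => e1; clear -hcard e1; lia.
case: (ltnP k (p - 2)) => hk2; last first.
  exfalso.
  have e1 : p - 1 - k = 1 by clear -hk hk2 Hp; lia.
  rewrite e1 expn1 in hSa.
  have hC0 : Cs = set0 by apply: cards0_eq; rewrite hcC; clear -hk hk2; lia.
  have : 0 < #|S :\ a| by clear -hSa Hp; lia.
  case/card_gt0P => b hb'. by have := excl b hb'; rewrite hC0 inE.
split => //.
set P := p ^ (p - 1 - k.+1).
have [e he hfib] : exists2 e, e \in Cs & P <= #|[set b in S :\ a | col b == e]|.
  case: (boolP [exists e in Cs, P <= #|[set b in S :\ a | col b == e]|]) => [/exists_inP [e he hP]|hno].
    by exists e.
  exfalso.
  have hall : forall e, e \in Cs -> #|[set b in S :\ a | col b == e]| <= P - 1.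
    move=> e he; move: hno; rewrite negb_exists_in => /forall_inP /(_ e he).
    rewrite -ltnNge => h; clear -h; lia.
  have := pigeon excl hall; rewrite hcC.
  have eP : p ^ (p - 1 - k) = p * P.
    by rewrite /P -expnS; congr (_ ^ _); clear -hk2 Hp; lia.
  rewrite eP in hSa.
  have hP1 : 0 < P by rewrite expn_gt0; apply/orP; left; clear -Hp; lia.
  move=> h; clear -h hSa hP1 Hp hk2; nia.
have [heE heB] : e \in atE /\ e \notin Bs by move: he; rewrite in_setD => /andP [].
move: heB; rewrite /Bs !in_setU1 inE !negb_or => /and3P [heI heu hecs].
exists dd', (rcons cs e), [set b in S :\ a | col b == e]; split; split => //.
- by rewrite size_rcons hsz.
- by rewrite rcons_uniq huq andbT.
- move=> x; rewrite mem_rcons inE => /orP [/eqP -> | hx]; last exact: hcs.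
  split; first by rewrite inE in heE.
    by apply/eqP.
  by apply/eqP.
- apply/subsetP => x; rewrite inE in_setD1 => /andP [/andP [_ hx] _]; exact: (subsetP hS).
- move=> b; rewrite inE => /andP [hb' /eqP hcb].
  have [_ h] : col b \in atE /\ leD dd' (c p (MD (Yb b) (Fg (col b) k.+1 p))) by apply: hcol; rewrite mem_enum.
  by rewrite PF_rcons hsz add1n (mA HBD) -hcb.
Qed.

Lemma InvAll k : k <= p - 2 -> Inv k.
Proof.
elim: k => [_|k IH hk]; first exact: Inv0.
by case: (step (ltnW hk) (IH (ltnW hk))).
Qed.

Lemma core_false : False.
Proof. by case: (step (leqnn _) (InvAll (leqnn (p - 2)))); rewrite ltnn. Qed.
End Core.

Section Main.
Variables (T : finType) (o : NAops T).
Local Notation JA := (na_jn o). Local Notation MA := (na_mt o).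
Local Notation CA := (na_cp o). Local Notation ZA := (na_zr o).
Local Notation UA := (na_un o). Local Notation cmp := (na_comp o).
Local Notation I := (na_id o).
Local Notation leA := (le JA).
Hypothesis HNA : is_NA o.
Hypothesis Hsym : symmetric_in o [set: T].
Hypothesis HidA : atom_in o [set: T] I.
Let HBA : is_BA JA MA CA ZA UA := HNA.1.

Lemma big_le (S : {set T}) x : x \in S -> leA x (\big[JA/ZA]_(a in S) a).
Proof.
move=> hx.
have : forall r, x \in r -> leA x (\big[JA/ZA]_(a <- r | a \in S) a).
  elim => [//|h t IH] hr; rewrite big_cons.
  case: (boolP (h \in S)) => hh.
    case: (eqVneq x h) => [->|hne]; first exact: (le_jl HBA).
    apply: (le_trans HBA (IH _)); last exact: (le_jr HBA).
    by move: hr; rewrite inE (negbTE hne).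
  apply: IH; move: hr; rewrite inE => /orP [/eqP e|//].
  by move: hh; rewrite -e hx.
by apply; rewrite mem_index_enum.
Qed.

Lemma UZ : UA <> ZA.
Proof.
move=> e; apply: (atom_nz HidA).
by rewrite -(m1 HBA I) e (m0 HBA).
Qed.

Lemma partI (E : {set T}) (p : nat) : subalgebra o E -> atom_in o E I ->
  #|[set x | atom_in o E x]| = p -> 3 < p ->
  (forall u, atom_in o E u -> na_le o u (na_div o) -> MA (cmp u u) u = ZA) ->
  (exists u, [/\ atom_in o E u, na_le o u (na_div o) &
     exists S : {set T}, [/\ S \subset [set a | atom_in o [set: T] a],
        \big[JA / ZA]_(a in S) a = u & p ^ (p - 1) <= #|S|]]) ->
  forall (D : Type) (oD : CAops D) (g : T -> D),
  is_CA p.+1 oD ->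
  ca_un oD <> ca_zr oD ->
  (forall a, Two oD p.+1 (g a)) ->
  (forall a b, g (JA a b) = ca_jn oD (g a) (g b)) ->
  (forall a b, g (MA a b) = ca_mt oD (g a) (g b)) ->
  g ZA = ca_zr oD -> g UA = ca_un oD ->
  (forall y z, le (ca_jn oD) (ca_c oD 2 (ca_mt oD (ca_s oD 1 2 (g y)) (ca_s oD 0 2 (g z)))) (g (cmp y z))) ->
  (forall b, atom_in o [set: T] b -> ca_c oD 1 (g b) = ca_un oD) -> False.
Proof.
move=> HE HidE Hcard Hp Hno1 [u [Hu Hudiv [S [hsub hbig hcS]]]] D oD g HC G0 G1 GJ GM GZ GU G5 G6.
have HSU : forall a, a \in S -> atom_in o [set: T] a /\ leA a u.
  move=> a ha; split; first by have := subsetP hsub a ha; rewrite inE.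
  by rewrite -hbig; exact: big_le.
exact: (core_false HNA Hsym HidA HE HidE Hcard Hp Hno1 Hu Hudiv HSU hcS HC G0 G1 GJ GM GZ GU G5 G6).
Qed.

Lemma part1 (E : {set T}) (p : nat) : subalgebra o E -> atom_in o E I ->
  #|[set x | atom_in o E x]| = p -> 3 < p ->
  (forall u, atom_in o E u -> na_le o u (na_div o) -> MA (cmp u u) u = ZA) ->
  (exists u, [/\ atom_in o E u, na_le o u (na_div o) &
     exists S : {set T}, [/\ S \subset [set a | atom_in o [set: T] a],
        \big[JA / ZA]_(a in S) a = u & p ^ (p - 1) <= #|S|]]) ->
  ~ in_SRaCA p.+1 o.
Proof.
move=> HE HidE Hcard Hp Hno1 Hex.
move=> [D' [oD [HC [Dsub [[_ [_ [_ [_ [_ [_ [_ Dcl]]]]]]] [h [hinj [hra [hJ [hM [hC [hZ [hU [hI [hconv hcomp]]]]]]]]]]]]]]].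
have HBD := HC.1.
have h2 : 2 < p.+1 by clear -Hp; lia.
have h1 : 1 < p.+1 by clear -Hp; lia.
have h0 : 0 < p.+1 by [].
apply: (partI HE HidE Hcard Hp Hno1 Hex (g := h) HC) => //.
- by move=> e; apply: UZ; apply: hinj; rewrite hU hZ.
- move=> a k /andP [hk2 hkm]; case: (eqVneq k 2) => [->|hk]; first by case: (hra a).
  apply: Dcl; first by case: (hra a).
  by rewrite hkm andbT; move: hk2; rewrite leq_eqVlt eq_sym (negbTE hk).
- by move=> y z; rewrite hcomp /ra_comp; exact: (le_refl HBD).
- move=> b hb.
  have e1 : h (cmp b UA) = ca_c oD 1 (h b).
    rewrite hcomp /ra_comp hU (s_U HC) // (m1 HBD) (s_bound HC) //.
    by case: (hra b).
  have hle : le (ca_jn oD) (ca_d oD 0 1) (ca_c oD 1 (h b)).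
    rewrite -hI -e1; have := id_le_b1 HNA Hsym HidA (atom_nz hb).
    by rewrite /le -hJ => ->.
  apply: (le_anti HBD); first exact: (le1 HBD).
  by have := c_mono HC h1 hle; rewrite (c_djj HC) // (cc HC).
Qed.

Definition i0 : 'I_3 := @Ordinal 3 0 isT.
Definition i1 : 'I_3 := @Ordinal 3 1 isT.
Definition i2 : 'I_3 := @Ordinal 3 2 isT.
Lemma inord0 : inord 0 = i0. Proof. by apply: val_inj; rewrite /= inordK. Qed.
Lemma inord1 : inord 1 = i1. Proof. by apply: val_inj; rewrite /= inordK. Qed.
Lemma inord2 : inord 2 = i2. Proof. by apply: val_inj; rewrite /= inordK. Qed.

Definition fB a : {set B3 o} := [set mu : B3 o | na_le o (val mu (inord 0, inord 1)) a].

Lemma bas (mu : B3 o) (i j l : 'I_3) :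
  [/\ atom_in o [set: T] (val mu (i, j)), leA (val mu (i, i)) I,
      val mu (i, j) = val mu (j, i) & leA (val mu (i, j)) (cmp (val mu (i, l)) (val mu (l, j)))].
Proof.
have := valP mu; move/forallP/(_ i)/forallP/(_ j)/forallP/(_ l)/and4P => [h1 /na_leP h2 /eqP h3 /na_leP h4].
by split => //; rewrite -h3 (cv_id Hsym).
Qed.

Lemma cylP (i : nat) (X : {set B3 o}) (mu : B3 o) : mu \in Ca_cyl i X ->
  exists2 mu', mu' \in X & forall l k : 'I_3, (l : nat) != i -> (k : nat) != i -> val mu (l, k) = val mu' (l, k).
Proof.
rewrite inE => /existsP [mu' /andP [h1 /forallP h2]]; exists mu' => // l k hl hk.
by move: (h2 l) => /forallP /(_ k) /implyP; rewrite hl hk => /(_ isT) /eqP.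
Qed.

Lemma cylI (i : nat) (X : {set B3 o}) (mu mu' : B3 o) : mu' \in X ->
  (forall l k : 'I_3, (l : nat) != i -> (k : nat) != i -> val mu (l, k) = val mu' (l, k)) ->
  mu \in Ca_cyl i X.
Proof.
move=> h1 h2; rewrite inE; apply/existsP; exists mu'; rewrite h1 /=.
apply/forallP => l; apply/forallP => k; apply/implyP => /andP [hl hk]; apply/eqP; exact: h2.
Qed.

Definition mat0 : mat T := [ffun _ => I].
Lemma basic0 : basic3 o mat0.
Proof.
apply/forallP => i; apply/forallP => j; apply/forallP => l; rewrite !ffunE.
apply/and4P; split; [exact: HidA | apply/na_leP; exact: (le_refl HBA)
  | apply/eqP; exact: (cv_id Hsym) | apply/na_leP; rewrite (cmp1 HNA); exact: (le_refl HBA)].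
Qed.

Definition matb (b : T) : mat T := [ffun ij : 'I_3 * 'I_3 => if (ij.1 == i1) (+) (ij.2 == i1) then b else I].
Lemma basicb b : atom_in o [set: T] b -> basic3 o (matb b).
Proof.
move=> hb.
have t1 : na_le o I (cmp I I) by apply/na_leP; rewrite (cmp1 HNA); exact: (le_refl HBA).
have t2 : na_le o b (cmp b I) by apply/na_leP; rewrite (cmp1 HNA); exact: (le_refl HBA).
have t3 : na_le o b (cmp I b) by apply/na_leP; rewrite (cmp1l HNA Hsym); exact: (le_refl HBA).
have t4 : na_le o I (cmp b b) by apply/na_leP; apply: (id_le_bb HNA Hsym HidA); exact: (atom_nz hb).
have t5 : na_le o I I by apply/na_leP; exact: (le_refl HBA).
apply/forallP => i; apply/forallP => j; apply/forallP => l; rewrite !ffunE /=.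
by case: (i == i1); case: (j == i1); case: (l == i1) => /=; apply/and4P; split => //;
  rewrite (cv_id Hsym).
Qed.

Lemma part2 (E : {set T}) (p : nat) : subalgebra o E -> atom_in o E I ->
  #|[set x | atom_in o E x]| = p -> 3 < p ->
  (forall u, atom_in o E u -> na_le o u (na_div o) -> MA (cmp u u) u = ZA) ->
  (exists u, [/\ atom_in o E u, na_le o u (na_div o) &
     exists S : {set T}, [/\ S \subset [set a | atom_in o [set: T] a],
        \big[JA / ZA]_(a in S) a = u & p ^ (p - 1) <= #|S|]]) ->
  ~ in_SNrCA 3 p.+1 (CaB3 o).
Proof.
move=> HE HidE Hcard Hp Hno1 Hex.
move=> [D [oD [HC [h [hinj [hc [hJ [hM [hC [hZ [hU [hcyl hdiag]]]]]]]]]]]].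
have HBD := HC.1.
have h2 : 2 < p.+1 by clear -Hp; lia.
have h1 : 1 < p.+1 by clear -Hp; lia.
have h0 : 0 < p.+1 by [].
have hmono : forall X Y : {set B3 o}, X \subset Y -> le (ca_jn oD) (h X) (h Y).
  by move=> X Y hXY; rewrite /le -hJ /= (setUidPr hXY).
have cyl2 : forall a, Ca_cyl 2 (fB a) = fB a.
  move=> a; apply/setP => mu; apply/idP/idP.
    move/cylP => [mu' hmu' hag]; move: hmu'; rewrite !inE inord0 inord1 hag //.
  by move=> hmu; apply: (cylI hmu).
apply: (partI HE HidE Hcard Hp Hno1 Hex (g := fun a => h (fB a)) HC) => //.
- move=> e; have : h setT = h set0 by rewrite hU hZ.
  move/hinj => e2.
  have : (exist _ mat0 basic0 : B3 o) \in [set: B3 o] by rewrite in_setT.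
  by rewrite e2 in_set0.
- move=> a k /andP [hk2 hkm]; case: (eqVneq k 2) => [->|hk].
    by rewrite -(hcyl 2) //= cyl2.
  apply: hc; rewrite hkm andbT.
  by move: hk2; rewrite leq_eqVlt eq_sym (negbTE hk).
- move=> a b; rewrite -hJ; congr (h _); apply/setP => mu; rewrite !inE.
  have [hat _ _ _] := bas mu (inord 0) (inord 1) (inord 0).
  apply/idP/orP.
    by move/na_leP/(atom_join HNA hat) => [] /na_leP; [left|right].
  by case=> /na_leP hle; apply/na_leP; apply: (le_trans HBA hle); [exact: (le_jl HBA)|exact: (le_jr HBA)].
- move=> a b; rewrite -hM; congr (h _); apply/setP => mu; rewrite !inE.
  apply/idP/andP.
    move/na_leP => hle; split; apply/na_leP; apply: (le_trans HBA hle); [exact: (le_ml HBA)|exact: (le_mr HBA)].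
  by case=> /na_leP h3 /na_leP h4; apply/na_leP; exact: (le_mglb HBA).
- rewrite -hZ; congr (h _); apply/setP => mu; rewrite !inE.
  have [hat _ _ _] := bas mu (inord 0) (inord 1) (inord 0).
  apply/negP => /na_leP /(le0E HBA); exact: (atom_nz hat).
- rewrite -hU; congr (h _); apply/setP => mu; rewrite !inE.
  by apply/na_leP; exact: (le1 HBA).
- move=> y z.
  rewrite /ca_s -!hdiag // -!hM -!hcyl // -hM -hcyl //.
  apply: hmono; apply/subsetP => mu /cylP [nu hnu hag].
  move: hnu => /setIP [/cylP [nu' hnu' hag'] /cylP [nu'' hnu'' hag'']].
  move: hnu' => /setIP [hd12 hy]; move: hnu'' => /setIP [hd02 hz].
  rewrite !inE !inord0 !inord1 !inord2 in hd12 hy hd02 hz *.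
  move/na_leP: hd12 => hd12; move/na_leP: hy => hy; move/na_leP: hd02 => hd02; move/na_leP: hz => hz.
  apply/na_leP.
  rewrite hag //.
  have [_ _ _ t1] := bas nu i0 i1 i2.
  apply: (le_trans HBA t1); apply: (cmp_mono HNA Hsym).
  + rewrite hag' //.
    have [_ _ _ t2] := bas nu' i0 i2 i1.
    have [a12 _ _ _] := bas nu' i1 i2 i0.
    have e12 := atom_le_atom a12 HidA hd12.
    apply: (le_trans HBA t2); rewrite e12 (cmp1 HNA); exact: hy.
  + rewrite hag'' //.
    have [_ _ _ t2] := bas nu'' i2 i1 i0.
    have [a02 _ s02 _] := bas nu'' i0 i2 i0.
    have e02 := atom_le_atom a02 HidA hd02.
    apply: (le_trans HBA t2); rewrite -s02 e02 (cmp1l HNA Hsym); exact: hz.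
- move=> b hb.
  have hle : le (ca_jn oD) (ca_d oD 0 2) (ca_c oD 1 (h (fB b))).
    rewrite -hdiag // -hcyl //; apply: hmono; apply/subsetP => mu.
    rewrite inE inord0 inord2 => /na_leP hd.
    apply: (cylI (mu' := exist _ (matb b) (basicb hb))).
      by rewrite inE inord0 inord1 /= ffunE /=; apply/na_leP; exact: (le_refl HBA).
    move=> l k hl hk /=; rewrite ffunE /=.
    have hl' : l != i1 by apply/eqP => e; move: hl; rewrite e.
    have hk' : k != i1 by apply/eqP => e; move: hk; rewrite e.
    rewrite (negbTE hl') (negbTE hk') /=.
    have hI : forall x : 'I_3, x != i1 -> x = i0 \/ x = i2.
      move=> [[|[|[|n]]] hx] hne.
      - by left; apply: val_inj.
      - by exfalso; move/negP: hne; apply; apply/eqP; apply: val_inj.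
      - by right; apply: val_inj.
      - by [].
    have atI : forall x y : 'I_3, leA (val mu (x, y)) I -> val mu (x, y) = I.
      by move=> x y hxy; have [ax _ _ _] := bas mu x y x; exact: (atom_le_atom ax HidA).
    case: (hI l hl') => ->; case: (hI k hk') => ->; apply: atI.
    * by have [_ t _ _] := bas mu i0 i0 i0.
    * exact: hd.
    * by have [_ _ t _] := bas mu i2 i0 i0; rewrite t.
    * by have [_ t _ _] := bas mu i2 i2 i2.
  apply: (le_anti HBD); first exact: (le1 HBD).
  have := c_mono HC h2 hle; rewrite (c_djj HC) // (c4 HC) //.
  by have -> : ca_c oD 2 (h (fB b)) = h (fB b) by rewrite -(hcyl 2) //= cyl2.
Qed.
End Main.

Theorem theorem5 (T : finType) (o : NAops T) (E : {set T}) (p : nat) :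
  is_NA o ->
  subalgebra o E ->
  (* E finite (automatic, T is finite) and symmetric, 1' an atom of E, p > 3 atoms *)
  symmetric_in o E ->
  atom_in o E (na_id o) ->
  #|[set x | atom_in o E x]| = p ->
  3 < p ->
  (* E has no 1-cycles *)
  (forall u, atom_in o E u -> na_le o u (na_div o) ->
     na_mt o (na_comp o u u) u = na_zr o) ->
  (* A finite (T is a finType) and symmetric, 1' an atom of A *)
  symmetric_in o [set: T] ->
  atom_in o [set: T] (na_id o) ->
  (* some diversity atom of E is the join of at least p^(p-1) atoms of A *)
  (exists u, [/\ atom_in o E u, na_le o u (na_div o) &
     exists S : {set T}, [/\ S \subset [set a | atom_in o [set: T] a],
        \big[na_jn o / na_zr o]_(a in S) a = u & p ^ (p - 1) <= #|S|]]) ->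
  ~ in_SRaCA p.+1 o /\ ~ in_SNrCA 3 p.+1 (CaB3 o).
Proof.
move=> HNA HE _ HidE Hcard Hp Hno1 Hsym HidA Hex; split.
- exact: (part1 HNA Hsym HidA HE HidE Hcard Hp Hno1 Hex).
- exact: (part2 HNA Hsym HidA HE HidE Hcard Hp Hno1 Hex).
Qed.
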